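(* Let $G$ be a topological group, $\xi=(E\xrightarrow{p}X)$ a numerable principal $G$-bundle over a pointed space $(X,* )$, pointed by $\tilde*\in p^{-1}( * )$, with gauge group $\mathcal G$, and let $\mathrm{res}:\mathcal G\to G$ be the homomorphism defined by $\chi(\tilde* )=\tilde*\cdot\mathrm{res}(\chi)$. If $G$ is SIN, then $\mathrm{res}$ is uniformly continuous. If $G$ is path-connected, then $\mathrm{res}$ is surjective.
   Context: SIN: the identity has a fundamental system of conjugation-invariant neighbourhoods. The gauge group $\mathcal G$ is the group of $G$-equivariant homeomorphisms $\chi:E\to E$ with $p\chi=p$. Let $\gamma:E\times_XE\to G$ be defined by $y=z\cdot\gamma(y,z)$; $\mathcal V_G$ is the set of open symmetric neighbourhoods of the identity in $G$. $\mathcal G$ carries the uniform structure with fundamental entourages $\mathcal O^{\mathcal G}(K,V)=\{(\chi,\tilde\chi):\gamma(\chi(z),\tilde\chi(z))\in V\ \forall z\in p^{-1}(K)\}$, $K\subset X$ compact, $V\in\mathcal V_G$. $G$ carries the uniform structure with entourages $\{(\tilde g,g):\tilde gg^{-1}\in V\}$, $V\in\mathcal V_G$. *)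

(* Defs.v *)
From HB Require Import structures.
From mathcomp Require Import all_boot all_order all_algebra.
From mathcomp Require Import all_classical all_reals all_analysis.
From mathcomp Require Import Rstruct Rstruct_topology.
From Stdlib Require Import Rdefinitions.

Set Implicit Arguments.
Unset Strict Implicit.
Unset Printing Implicit Defensive.

Import Order.TTheory GRing.Theory Num.Theory.
Local Open Scope classical_set_scope.
Local Open Scope ring_scope.

Notation Rl := Rdefinitions.R.

Definition is_topgroup (G : topologicalType) (mul : G -> G -> G)
  (inv : G -> G) (one : G) : Prop :=
  (forall a b c, mul a (mul b c) = mul (mul a b) c) /\
  (forall a, mul one a = a) /\ (forall a, mul a one = a) /\
  (forall a, mul (inv a) a = one) /\ (forall a, mul a (inv a) = one) /\
  continuous (fun q : G * G => mul q.1 q.2) /\ continuous inv.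

Definition VG (G : topologicalType) (inv : G -> G) (one : G) (V : set G) : Prop :=
  open V /\ V one /\ (forall g, V g -> V (inv g)).

Definition SIN (G : topologicalType) (mul : G -> G -> G) (inv : G -> G)
  (one : G) : Prop :=
  forall U, nbhs one U -> exists V, nbhs one V /\ V `<=` U /\
    (forall g v, V v -> V (mul (mul g v) (inv g))).

Definition path_connected (G : topologicalType) : Prop :=
  forall a b : G, exists f : Rl -> G,
    {within `[0%R, 1%R], continuous f} /\ f 0%R = a /\ f 1%R = b.

Definition right_action (G E : topologicalType) (mul : G -> G -> G) (one : G)
  (act : E -> G -> E) : Prop :=
  continuous (fun q : E * G => act q.1 q.2) /\
  (forall z, act z one = z) /\
  (forall z g h, act (act z g) h = act z (mul g h)).

Definition local_trivialization (G E X : topologicalType) (mul : G -> G -> G)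
  (p : E -> X) (act : E -> G -> E) (U : set X) : Prop :=
  exists (h : X * G -> E) (k : E -> X * G),
    {within U `*` setT, continuous h} /\
    {within p @^-1` U, continuous k} /\
    (forall x g, U x -> p (h (x, g)) = x) /\
    (forall x g g', U x -> h (x, mul g g') = act (h (x, g)) g') /\
    (forall x g, U x -> k (h (x, g)) = (x, g)) /\
    (forall z, U (p z) -> h (k z) = z).

Definition numerable_cover (X : topologicalType) (I : choiceType)
  (U : I -> set X) : Prop :=
  (forall i, open (U i)) /\
  exists u : I -> X -> Rl,
    (forall i, continuous (u i)) /\
    (forall i x, (0 <= u i x)%R /\ (u i x <= 1)%R) /\
    (forall i, [set x | u i x != 0%R] `<=` U i) /\
    (forall x : X, exists2 N : set X, nbhs x N &
        finite_set [set i | exists2 y, N y & u i y != 0%R]) /\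
    (forall x, (\sum_(i \in [set i | u i x != 0%R]) u i x)%R = 1%R).

Definition numerable_principal_bundle (G E X : topologicalType)
  (mul : G -> G -> G) (one : G) (p : E -> X) (act : E -> G -> E) : Prop :=
  continuous p /\ right_action mul one act /\
  (forall z g, p (act z g) = p z) /\
  exists (I : choiceType) (U : I -> set X),
    numerable_cover U /\ (forall x, exists i, U i x) /\
    (forall i, local_trivialization mul p act (U i)).

Definition gauge (G E X : topologicalType) (p : E -> X) (act : E -> G -> E)
  (chi : E -> E) : Prop :=
  continuous chi /\
  (exists chi' : E -> E, continuous chi' /\ cancel chi chi' /\ cancel chi' chi) /\
  (forall z g, chi (act z g) = act (chi z) g) /\
  (forall z, p (chi z) = p z).

(* Main.v *)
Require Import Defs.
From HB Require Import structures.
From mathcomp Require Import all_boot all_order all_algebra.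
From mathcomp Require Import all_classical all_reals all_analysis.
From mathcomp Require Import Rstruct Rstruct_topology.
From mathcomp Require Import lra.
Local Open Scope classical_set_scope.
Set Implicit Arguments. Unset Strict Implicit.
Lemma within_comp_cont (T S U : topologicalType) (A : set S) (f : S -> U) (g : T -> S) :
  {within A, continuous f} -> continuous g -> (forall x, A (g x)) ->
  continuous (f \o g).
Proof.
move=> cf cg gA x.
have := cf (g x); rewrite /continuous_at /= => H.
have {}H : f @ within A (nbhs (g x)) --> f (g x).
  by rewrite (nbhs_subspace_in (gA x)); exact: H.
move=> W /H; rewrite /within /= => HW.
have := cg x _ HW; move=> HW2; apply: (@filterS _ (nbhs x) _ _ _ _ HW2) => y Hy; exact: Hy (gA y).
Qed.

Lemma in_open_cont (T U : topologicalType) (A : set T) (f : T -> U) (x : T) :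
  {within A, continuous f} -> open A -> A x -> {for x, continuous f}.
Proof.
move=> cf oA Ax; move: cf; rewrite continuous_open_subspace // => cf.
by apply: cf; rewrite inE.
Qed.

Lemma clip_cont : continuous (fun t : Rl => Order.min (1%R : Rl) (Order.max 0%R t)).
Proof.
move=> x.
apply: (@continuous_min Rl Rl (fun=> 1%R) (fun t => Order.max 0%R t)).
  exact: cst_continuous.
apply: (@continuous_max Rl Rl (fun=> 0%R) id).
  exact: cst_continuous.
exact: cvg_id.
Qed.
Lemma lin_cont (X : topologicalType) (u : X -> Rl) (s : Rl) : continuous u -> continuous (fun x => (u x * s - 1)%R).
Proof.
move=> uc x.
apply: (@cvgB _ Rl^o).
  exact: (@cvgMl Rl _ _ _ u (u x) s (uc x)).
exact: cvg_cst.
Qed.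
Definition chiF {G E X : Type} (mul : G -> G -> G) (p : E -> X)
  (h : X * G -> E) (k : E -> X * G) (u : X -> Rl) (r : Rl) (d : X -> G)
  (z : E) : E :=
  if (r < u (p z))%R then h (p z, mul (d (p z)) (k z).2) else z.

Lemma triv_coord {G E X : Type} (mul : G -> G -> G) (one : G) (p : E -> X)
  (act : E -> G -> E) (gamma : E -> E -> G) (U : set X)
  (h : X * G -> E) (k : E -> X * G) :
  (forall a, mul one a = a) ->
  (forall y z, p y = p z -> y = act z (gamma y z)) ->
  (forall x g, U x -> p (h (x, g)) = x) ->
  (forall x g g', U x -> h (x, mul g g') = act (h (x, g)) g') ->
  (forall x g, U x -> k (h (x, g)) = (x, g)) ->
  forall z, U (p z) -> h (p z, (k z).2) = z /\ k z = (p z, (k z).2).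
Proof.
move=> Hone Hgam hp hact hkh z Uz.
set e0 := h (p z, one).
have pe0 : p z = p e0 by rewrite /e0 hp.
have hz : z = h (p z, gamma z e0).
  by rewrite {1}(Hgam z e0 pe0) /e0 -hact // Hone.
have kz : k z = (p z, gamma z e0) by rewrite {1}hz hkh.
by rewrite kz /= -hz.
Qed.

Lemma chiF_eq {G E X : Type} (mul : G -> G -> G) (one : G) (p : E -> X)
  (act : E -> G -> E) (gamma : E -> E -> G) (U : set X)
  (h : X * G -> E) (k : E -> X * G) (u : X -> Rl) (r : Rl) (d : X -> G) :
  (forall a, mul one a = a) ->
  (forall y z, p y = p z -> y = act z (gamma y z)) ->
  (forall x g, U x -> p (h (x, g)) = x) ->
  (forall x g g', U x -> h (x, mul g g') = act (h (x, g)) g') ->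
  (forall x g, U x -> k (h (x, g)) = (x, g)) ->
  (forall x, ~~ (r < u x)%R -> d x = one) ->
  forall z, U (p z) ->
  chiF mul p h k u r d z = h (p z, mul (d (p z)) (k z).2).
Proof.
move=> Hone Hgam hp hact hkh Hd z Uz; rewrite /chiF.
case: ifP => // /negbT /Hd ->; rewrite Hone.
by have [] := triv_coord Hone Hgam hp hact hkh Uz.
Qed.

Lemma chiF_out {G E X : Type} (mul : G -> G -> G) (p : E -> X)
  (U : set X) (h : X * G -> E) (k : E -> X * G) (u : X -> Rl) (r : Rl) (d : X -> G) :
  (0 < r)%R -> (forall x, u x != 0%R -> U x) ->
  forall z, ~ U (p z) -> chiF mul p h k u r d z = z.
Proof.
move=> r0 Hu z nU; rewrite /chiF; case: ifP => // ru.
exfalso; apply: nU; apply: Hu; apply/eqP => u0.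
by move: ru; rewrite u0; move/(Order.POrderTheory.lt_trans r0); rewrite Order.POrderTheory.ltxx.
Qed.

Lemma chiF_p {G E X : Type} (mul : G -> G -> G) (one : G) (p : E -> X)
  (act : E -> G -> E) (gamma : E -> E -> G) (U : set X)
  (h : X * G -> E) (k : E -> X * G) (u : X -> Rl) (r : Rl) (d : X -> G) :
  (forall a, mul one a = a) ->
  (forall y z, p y = p z -> y = act z (gamma y z)) ->
  (forall x g, U x -> p (h (x, g)) = x) ->
  (forall x g g', U x -> h (x, mul g g') = act (h (x, g)) g') ->
  (forall x g, U x -> k (h (x, g)) = (x, g)) ->
  (forall x, ~~ (r < u x)%R -> d x = one) ->
  (0 < r)%R -> (forall x, u x != 0%R -> U x) ->
  forall z, p (chiF mul p h k u r d z) = p z.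
Proof.
move=> Hone Hgam hp hact hkh Hd r0 Hu z.
have [Uz|nUz] := pselect (U (p z)).
  by rewrite (chiF_eq Hone Hgam hp hact hkh Hd Uz) hp.
by rewrite (chiF_out _ _ _ _ r0 Hu nUz).
Qed.

Lemma chiF_equiv {G E X : Type} (mul : G -> G -> G) (one : G) (p : E -> X)
  (act : E -> G -> E) (gamma : E -> E -> G) (U : set X)
  (h : X * G -> E) (k : E -> X * G) (u : X -> Rl) (r : Rl) (d : X -> G) :
  (forall a b c, mul a (mul b c) = mul (mul a b) c) ->
  (forall a, mul one a = a) ->
  (forall y z, p y = p z -> y = act z (gamma y z)) ->
  (forall z g, p (act z g) = p z) ->
  (forall x g, U x -> p (h (x, g)) = x) ->
  (forall x g g', U x -> h (x, mul g g') = act (h (x, g)) g') ->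
  (forall x g, U x -> k (h (x, g)) = (x, g)) ->
  (forall x, ~~ (r < u x)%R -> d x = one) ->
  (0 < r)%R -> (forall x, u x != 0%R -> U x) ->
  forall z b, chiF mul p h k u r d (act z b) = act (chiF mul p h k u r d z) b.
Proof.
move=> Hassoc Hone Hgam Hpact hp hact hkh Hd r0 Hu z b.
have [Uz|nUz] := pselect (U (p z)); last first.
  by rewrite !(chiF_out _ _ _ _ r0 Hu) // Hpact.
have Uz' : U (p (act z b)) by rewrite Hpact.
rewrite (chiF_eq Hone Hgam hp hact hkh Hd Uz) (chiF_eq Hone Hgam hp hact hkh Hd Uz').
have [hz kz] := triv_coord Hone Hgam hp hact hkh Uz.
have e : act z b = h (p z, mul (k z).2 b) by rewrite hact // hz.
rewrite Hpact e hkh //= Hassoc hact //.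
Qed.

Lemma chiF_cancel {G E X : Type} (mul : G -> G -> G) (one : G) (p : E -> X)
  (act : E -> G -> E) (gamma : E -> E -> G) (U : set X)
  (h : X * G -> E) (k : E -> X * G) (u : X -> Rl) (r : Rl) (d e : X -> G) :
  (forall a b c, mul a (mul b c) = mul (mul a b) c) ->
  (forall a, mul one a = a) ->
  (forall y z, p y = p z -> y = act z (gamma y z)) ->
  (forall x g, U x -> p (h (x, g)) = x) ->
  (forall x g g', U x -> h (x, mul g g') = act (h (x, g)) g') ->
  (forall x g, U x -> k (h (x, g)) = (x, g)) ->
  (forall x, ~~ (r < u x)%R -> d x = one) ->
  (forall x, ~~ (r < u x)%R -> e x = one) ->
  (0 < r)%R -> (forall x, u x != 0%R -> U x) ->
  (forall x, mul (d x) (e x) = one) ->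
  forall z, chiF mul p h k u r d (chiF mul p h k u r e z) = z.
Proof.
move=> Hassoc Hone Hgam hp hact hkh Hd He r0 Hu Hde z.
have [Uz|nUz] := pselect (U (p z)); last first.
  by rewrite !(chiF_out _ _ _ _ r0 Hu) // (chiF_out _ _ _ _ r0 Hu).
rewrite (chiF_eq Hone Hgam hp hact hkh He Uz).
have Uz' : U (p (h (p z, mul (e (p z)) (k z).2))) by rewrite hp.
rewrite (chiF_eq Hone Hgam hp hact hkh Hd Uz') hp // hkh //= Hassoc Hde Hone.
by have [] := triv_coord Hone Hgam hp hact hkh Uz.
Qed.

Lemma chiF_cont {G E X : topologicalType} (mul : G -> G -> G) (one : G) (p : E -> X)
  (act : E -> G -> E) (gamma : E -> E -> G) (U : set X)
  (h : X * G -> E) (k : E -> X * G) (u : X -> Rl) (r : Rl) (d : X -> G) :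
  continuous (fun q : G * G => mul q.1 q.2) ->
  continuous p -> open U ->
  {within U `*` setT, continuous h} -> {within p @^-1` U, continuous k} ->
  continuous u -> continuous d ->
  (forall a, mul one a = a) ->
  (forall y z, p y = p z -> y = act z (gamma y z)) ->
  (forall x g, U x -> p (h (x, g)) = x) ->
  (forall x g g', U x -> h (x, mul g g') = act (h (x, g)) g') ->
  (forall x g, U x -> k (h (x, g)) = (x, g)) ->
  (forall x, ~~ (r < u x)%R -> d x = one) ->
  (0 < r)%R -> (forall x, u x != 0%R -> U x) ->
  continuous (chiF mul p h k u r d).
Proof.
move=> Hmc Hpc HUo hc kc Huc Hdc Hone Hgam hp hact hkh Hd r0 Hu z.
rewrite /continuous_at.
have oPU : open (p @^-1` U) by apply: open_comp => // x _; exact: Hpc.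
have [ltr|ler] := Order.TotalTheory.ltP (u (p z)) r.
  have N : nbhs z [set w | (u (p w) < r)%R].
    apply: open_nbhs_nbhs; split => //.
    have -> : [set w | (u (p w) < r)%R] = (u \o p) @^-1` [set t | (t < r)%R] by [].
    apply: open_comp; last exact: open_lt.
    move=> x _; apply: continuous_comp; [exact: Hpc | exact: Huc].
  have -> : chiF mul p h k u r d z = z.
    by rewrite /chiF ifN // Order.TotalTheory.ltNge Order.POrderTheory.ltW.
  apply: (cvg_trans (near_eq_cvg (f:=id) _)); last exact: cvg_id.
  apply: filterS N => w /= hw.
  by rewrite /chiF ifN // Order.TotalTheory.ltNge Order.POrderTheory.ltW.
have Uz : U (p z).
  apply: Hu; apply/eqP => u0; move: ler; rewrite u0.
  by rewrite Order.TotalTheory.leNgt r0.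
have oUG : open (U `*` [set: G]).
  have -> : U `*` [set: G] = fst @^-1` U.
    by apply/seteqP; split=> -[x g] /=; [case|split].
  by apply: open_comp => // x _; exact: cvg_fst.
have kcz : {for z, continuous k} := in_open_cont kc oPU Uz.
have hcz : {for (p z, mul (d (p z)) (k z).2), continuous h}.
  exact: (in_open_cont hc oUG).
pose F := fun w => h (p w, mul (d (p w)) (k w).2).
have Fc : {for z, continuous F}.
  apply: (continuous_comp (f := fun w => (p w, mul (d (p w)) (k w).2))) => //.
  apply: cvg_pair; first exact: Hpc.
  apply: (continuous_comp (f := fun w => (d (p w), (k w).2)) (g := fun q => mul q.1 q.2)); last exact: Hmc.
  apply: cvg_pair; first exact: (continuous_comp (Hpc z) (Hdc _)).
  exact: (continuous_comp kcz cvg_snd).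
rewrite (chiF_eq Hone Hgam hp hact hkh Hd Uz).
apply: (cvg_trans (near_eq_cvg (f:=F) _)); last exact: Fc.
have N : nbhs z (p @^-1` U) by apply: open_nbhs_nbhs; split.
apply: filterS N => w /= Uw.
by rewrite (chiF_eq Hone Hgam hp hact hkh Hd Uw).
Qed.
Import Order.TTheory GRing.Theory Num.Theory.
Lemma free_act {G E X : Type} (mul : G -> G -> G) (one : G) (inv : G -> G)
  (p : E -> X) (act : E -> G -> E) (gamma : E -> E -> G) (U : set X)
  (h : X * G -> E) (k : E -> X * G) :
  (forall a b c, mul a (mul b c) = mul (mul a b) c) ->
  (forall a, mul one a = a) ->
  (forall a, mul (inv a) a = one) ->
  (forall y z, p y = p z -> y = act z (gamma y z)) ->
  (forall x g, U x -> p (h (x, g)) = x) ->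
  (forall x g g', U x -> h (x, mul g g') = act (h (x, g)) g') ->
  (forall x g, U x -> k (h (x, g)) = (x, g)) ->
  forall t a b, U (p t) -> act t a = act t b -> a = b.
Proof.
move=> Hassoc Hone Hinvl Hgam hp hact hkh t a b Ut e.
have [ht kt] := triv_coord Hone Hgam hp hact hkh Ut.
move: e; rewrite -ht -!hact // => /(congr1 k); rewrite !hkh // => -[] e.
by rewrite -(Hone a) -(Hone b) -(Hinvl (k t).2) -!Hassoc e.
Qed.

Unset Implicit Arguments.
Theorem proposition3p2 (G E X : topologicalType)
  (mul : G -> G -> G) (inv : G -> G) (one : G)
  (p : E -> X) (act : E -> G -> E) (base : X) (tbase : E)
  (gamma : E -> E -> G) (res : (E -> E) -> G) :
  is_topgroup mul inv one ->
  numerable_principal_bundle mul one p act ->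
  p tbase = base ->
  (* gamma : E x_X E -> G, y = z . gamma(y, z) *)
  (forall y z, p y = p z -> y = act z (gamma y z)) ->
  (* res : gauge group -> G, chi(tbase) = tbase . res(chi) *)
  (forall chi, gauge p act chi -> chi tbase = act tbase (res chi)) ->
  (SIN mul inv one ->
     (* res is uniformly continuous *)
     forall V, VG inv one V ->
       exists (K : set X) (W : set G), compact K /\ VG inv one W /\
         forall chi chi', gauge p act chi -> gauge p act chi' ->
           (forall z, K (p z) -> W (gamma (chi z) (chi' z))) ->
           V (mul (res chi) (inv (res chi')))) /\
  (path_connected G ->
     forall g, exists chi, gauge p act chi /\ res chi = g).
Proof.
move=> [Hassoc [Hone [Hone' [Hinvl [Hinvr [Hmc Hic]]]]]].
move=> [Hpc [[Hactc [Hact1 Hactm]] [Hpact [I [U [[HUo [u [Huc [Hu01 [Hsupp [Hlf Hsum]]]]]] [Hcov Htriv]]]]]]].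
move=> Hpb Hgam Hres.
have inv1 : inv one = one by rewrite -[inv one]Hone' Hinvl.
have invK : forall a, inv (inv a) = a.
  by move=> a; rewrite -[inv (inv a)]Hone' -(Hinvl a) Hassoc Hinvl Hone.
have [i0 Ui0] := Hcov base.
have [h0 [k0 [hc0 [kc0 [hp0 [hact0 [hkh0 hhk0]]]]]]] := Htriv i0.
have Ut0 : U i0 (p tbase) by rewrite Hpb.
have free := free_act Hassoc Hone Hinvl Hgam hp0 hact0 hkh0 Ut0.
split.
  move=> Hsin V [Vo [V1 Vs]].
  have nV : nbhs one V by apply: open_nbhs_nbhs; split.
  have [V0 [nV0 [V0V V0c]]] := Hsin V nV.
  exists [set base], (V0° `&` inv @^-1` V0°).
  split; first exact: compact_set1.
  split.
    split; first apply: openI; first exact: open_interior.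
      by apply: open_comp; [move=> x _; exact: Hic | exact: open_interior].
    split.
      by split; rewrite /= ?inv1; exact: nV0.
    by move=> x [Hx1 Hx2]; split => //=; rewrite invK.
  move=> chi chi' gc gc' HK.
  have gp := gc.2.2.2; have gp' := gc'.2.2.2.
  have Hw := HK tbase Hpb; set w := gamma _ _ in Hw.
  have ew : chi tbase = act (chi' tbase) w by apply: Hgam; rewrite gp gp'.
  have er : res chi = mul (res chi') w.
    apply: free; rewrite -Hres // -Hactm -Hres //.
  rewrite er; apply: V0V; apply: V0c.
  by case: Hw => /nbhs_singleton.
move=> Hpath g.
have [i ui] : exists i, u i base != 0%R.
  case: (pselect (exists i, u i base != 0%R)) => // nex; exfalso.
  have := Hsum base.
  rewrite (_ : [set i | u i base != 0%R] = set0); last first.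
    by apply/seteqP; split => j //= hj; apply: nex; exists j.
  by rewrite fsbig_set0 => /eqP; rewrite eq_sym oner_eq0.
have [h [k [hc [kc [hp [hact [hkh hhk]]]]]]] := Htriv i.
have Ut : U i (p tbase) by rewrite Hpb; exact: Hsupp.
set c := u i base.
have c0 : (0 < c)%R.
  rewrite lt_neqAle eq_sym ui /=; apply/RleP; exact: (Hu01 i base).1.
set r := (c / 2)%R.
have r0 : (0 < r)%R by rewrite /r; lra.
set s := (2 / c)%R.
have s0 : (0 < s)%R by rewrite /s divr_gt0.
have cs : (c * s = 2)%R by rewrite /s mulrC divfK // gt_eqF.
pose clip := fun t : Rl => Order.min (1%R : Rl) (Order.max 0%R t).
pose phi := fun x => clip (u i x * s - 1)%R.
have phic : continuous phi.
  move=> x; apply: (continuous_comp (f := fun x => (u i x * s - 1)%R)); last exact: clip_cont.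
  exact: lin_cont (Huc i) x.
have phi01 : forall x, (0 <= phi x <= 1)%R.
  move=> x; rewrite /phi /clip le_min ge_min lexx orTb andbT /=.
  by rewrite ler01 /= le_max lexx.
have phi0 : forall x, ~~ (r < u i x)%R -> phi x = 0%R.
  move=> x; rewrite -leNgt => hx.
  have hx' : (u i x * s - 1 <= 0)%R.
    have : (u i x * s <= r * s)%R by rewrite ler_pM2r.
    have -> : (r * s = 1)%R by rewrite /r mulrAC cs divff.
    by move=> H; rewrite subr_le0.
  by rewrite /phi /clip max_l // min_r.
have phi1 : phi base = 1%R.
  by rewrite /phi /clip -/c cs (_ : (2 - 1 = 1)%R) ?max_r ?minxx //; lra.
set a0 := (k tbase).2.
set t := mul (mul a0 g) (inv a0).
have [f [fc [f0 f1]]] := Hpath one t.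
pose d := f \o phi.
pose e := inv \o d.
have dc : continuous d.
  apply: (within_comp_cont fc phic) => x; rewrite /= in_itv /=.
  exact: phi01 x.
have ec : continuous e by move=> x; apply: continuous_comp; [exact: dc | exact: Hic].
have dout : forall x, ~~ (r < u i x)%R -> d x = one by move=> x /phi0 hx; rewrite /d /= hx.
have eout : forall x, ~~ (r < u i x)%R -> e x = one by move=> x /dout hx; rewrite /e /= hx.
have Hu : forall x, u i x != 0%R -> U i x by move=> x; exact: Hsupp.
pose chi := chiF mul p h k (u i) r d.
pose chi' := chiF mul p h k (u i) r e.
have gchi : gauge p act chi.
  split; first exact: (chiF_cont Hmc Hpc (HUo i) hc kc (Huc i) dc Hone Hgam hp hact hkh dout r0 Hu).
  split.
    exists chi'; split; first exact: (chiF_cont Hmc Hpc (HUo i) hc kc (Huc i) ec Hone Hgam hp hact hkh eout r0 Hu).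
    split => z.
      by apply: (chiF_cancel Hassoc Hone Hgam hp hact hkh eout dout r0 Hu) => x; rewrite /e /= Hinvl.
    by apply: (chiF_cancel Hassoc Hone Hgam hp hact hkh dout eout r0 Hu) => x; rewrite /e /= Hinvr.
  split; first exact: (chiF_equiv Hassoc Hone Hgam Hpact hp hact hkh dout r0 Hu).
  exact: (chiF_p Hone Hgam hp hact hkh dout r0 Hu).
exists chi; split => //.
have free' := free_act Hassoc Hone Hinvl Hgam hp hact hkh Ut.
apply: free'; rewrite -Hres //.
rewrite /chi (chiF_eq Hone Hgam hp hact hkh dout Ut).
have [ht kt] := triv_coord Hone Hgam hp hact hkh Ut.
rewrite -[in RHS]ht -hact //.
by rewrite /d /= Hpb phi1 f1 /t -Hassoc Hinvl Hone'.
Qed.
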